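(* Consider a one-dimensional SOCO problem with norm $\|\cdot\|$, let $\theta\ge1$ and $N$ the norm with $N(1)=\theta\|1\|$. Then, with probability $1$, $\mathbb{E}[SC(RBG(N))]\le OPT_N/\theta$.
   Context: The decision space is a compact interval $F=[x_L,x_H]\subseteq\mathbb{R}^+$, $\|\cdot\|$ is a norm on $\mathbb{R}$, and cost functions $c^t:F\to\mathbb{R}^+$ are convex with uniformly bounded subgradients. Algorithm RBG($N$): define $w^0(x)=N(x)$ and $w^t(x)=\min_{y\in F}\{w^{t-1}(y)+c^t(y)+N(x-y)\}$; draw $r$ uniformly at random from $(-1,1)$ once; at each time $t$ choose $x^t\in F$ minimizing $Y^t(x)=w^{t-1}(x)+rN(x)$. Switching cost (in the original norm): $SC(RBG(N))=\sum_{t=1}^T\|x^{t+1}-x^t\|$. $OPT_N=\min_{(x^1,\dots,x^T)\in F^T}\sum_{t=1}^Tc^t(x^t)+N(x^t-x^{t-1})$ with $x^0=0$. The expectation is over $r$. *)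

(* Defs.v *)
From HB Require Import structures.
From mathcomp Require Import all_boot all_order all_algebra.
From mathcomp Require Import all_classical all_reals all_analysis.
Set Implicit Arguments. Unset Strict Implicit. Unset Printing Implicit Defensive.
Import Order.TTheory GRing.Theory Num.Theory.
Import numFieldNormedType.Exports.
Local Open Scope classical_set_scope.
Local Open Scope ring_scope.

Section SOCO.
Variable R : realType.

Definition is_norm (n : R -> R) : Prop :=
  [/\ forall x, 0 <= n x,
      forall x, n x = 0 -> x = 0,
      forall a x, n (a * x) = `|a| * n x
    & forall x y, n (x + y) <= n x + n y].

Definition convex_on (F : set R) (f : R -> R) : Prop :=
  forall x y (l : R), F x -> F y -> 0 <= l <= 1 ->
    f (l * x + (1 - l) * y) <= l * f x + (1 - l) * f y.

Definition subgradient (F : set R) (f : R -> R) (x g : R) : Prop :=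
  forall y, F y -> f x + g * (y - x) <= f y.

Fixpoint rbg_w (F : set R) (N : R -> R) (c : nat -> R -> R) (t : nat) : R -> R :=
  match t with
  | 0 => N
  | t'.+1 => fun x =>
      inf [set rbg_w F N c t' y + c t'.+1 y + N (x - y) | y in F]
  end.

Definition rbg_Y (F : set R) (N : R -> R) (c : nat -> R -> R) (r : R) (t : nat)
  (x : R) : R := rbg_w F N c t.-1 x + r * N x.

Definition switching_cost (nrm : R -> R) (T : nat) (X : nat -> R) : R :=
  \sum_(1 <= t < T.+1) nrm (X t.+1 - X t).

Definition opt_cost (F : set R) (N : R -> R) (c : nat -> R -> R) (T : nat) : R :=
  inf [set (\sum_(1 <= t < T.+1) (c t (s t) + N (s t - s t.-1)))
       | s in [set s : nat -> R | s 0%N = 0 /\ forall t, (1 <= t <= T)%N -> F (s t)]].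

End SOCO.

(* Main.v *)
Require Import Defs.
From HB Require Import structures.
From mathcomp Require Import all_boot all_order all_algebra.
From mathcomp Require Import all_classical all_reals all_analysis.
From mathcomp Require Import lra ring.
Import Order.TTheory GRing.Theory Num.Theory.
Import numFieldNormedType.Exports.
Local Open Scope classical_set_scope.
Local Open Scope ring_scope.
Section Aux.
Variable R : realType.

Lemma absbound (u v p q l1 h1 l2 h2 : R) : l1 <= u <= h1 -> l1 <= p <= h1 ->
  l2 <= v <= h2 -> l2 <= q <= h2 ->
  `|v - u| <= `|q - p| + (h1 - l1) + (h2 - l2).
Proof.
move=> /andP[? ?] /andP[? ?] /andP[? ?] /andP[? ?].
have h1' := ler_norm (q - p); have h2' := ler_norm (p - q).
rewrite distrC in h2'.
rewrite ler_norml; apply/andP; split; lra.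
Qed.

Lemma tv_seq (v : nat -> R) n : (forall i, (i <= n)%N -> 0 <= v i) ->
  (forall i j k, (i < j)%N -> (j < k)%N -> (k <= n)%N -> v j <= Num.max (v i) (v k)) ->
  \sum_(0 <= i < n) `|v i.+1 - v i| <= v 0%N + v n.
Proof.
move=> v0 vq.
suff [m [[j [jn <-]] [mle H]]] : exists m, (exists j, (j <= n)%N /\ v j = m) /\
   (forall i, (i <= n)%N -> m <= v i) /\
   \sum_(0 <= i < n) `|v i.+1 - v i| <= v 0%N + v n - 2 * m.
  by have := v0 j jn; lra.
elim: n v0 vq => [|n IH] v0 vq.
  exists (v 0%N); split; first by exists 0%N.
  split; first by move=> i; rewrite leqn0 => /eqP ->.
  by rewrite big_geq //; lra.
have [m [[j [jn vj]] [mle Hs]]] : exists m, (exists j, (j <= n)%N /\ v j = m) /\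
   (forall i, (i <= n)%N -> m <= v i) /\
   \sum_(0 <= i < n) `|v i.+1 - v i| <= v 0%N + v n - 2 * m.
  apply: IH => [i ilt|i j k ij jk kn]; first by apply: v0; exact: leqW.
  by apply: vq => //; exact: leqW.
rewrite big_nat_recr //=.
have [hle|hlt] := leP (v n) (v n.+1).
  exists m; split; first by exists j; split => //; exact: leqW.
  split.
    move=> i; rewrite leq_eqVlt => /orP[/eqP ->|]; last by rewrite ltnS; exact: mle.
    by have := mle n (leqnn n); lra.
  by rewrite ger0_norm ?subr_ge0 //; lra.
have vnle : forall i, (i < n)%N -> v n <= v i.
  move=> i iltn; have := vq i n n.+1 iltn (ltnSn n) (leqnn _).
  rewrite le_max => /orP[//|]; lra.
have vnm : v n <= m.
  rewrite -vj; move: jn; rewrite leq_eqVlt => /orP[/eqP ->|/vnle //]; lra.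
exists (v n.+1); split; first by exists n.+1.
split.
  move=> i; rewrite leq_eqVlt => /orP[/eqP ->|]; first lra.
  rewrite ltnS => /mle; lra.
rewrite ltr0_norm ?subr_lt0 //; lra.
Qed.

End Aux.
Section IntGrid.
Variable R : realType.
Local Notation mu := (@lebesgue_measure R).

Lemma int_piece (f : R -> R) (lo hi C : R) : lo <= hi ->
  measurable_fun `]lo, hi] f ->
  (forall r, lo < r <= hi -> 0 <= f r <= C) ->
  (\int[mu]_(r in `]lo, hi]) (f r)%:E <= (C * (hi - lo))%:E)%E.
Proof.
move=> lohi mf hf.
apply: (@le_trans _ _ (\int[mu]_(r in `]lo, hi]) (cst C%:E) r)%E).
  apply: ge0_le_integral => //.
  - by move=> r; rewrite /= in_itv /= => /hf /andP[? ?]; rewrite lee_fin.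
  - by apply/measurable_realfun.measurable_EFinP.
  - by move=> r; rewrite /= in_itv /= => /hf /andP[? ?]; rewrite lee_fin.
rewrite integral_cst //= lebesgue_measure_itv /= lte_fin.
have [lh|] := ltP lo hi; first by rewrite -EFinD EFinM.
move=> hl; have -> : hi = lo by apply/eqP; rewrite eq_le hl lohi.
by rewrite subrr mulr0 mule0.
Qed.

Lemma int_grid (f : R -> R) (s : nat -> R) (C : nat -> R) (N : nat) :
  (forall i j, (i <= j)%N -> s i <= s j) -> (forall r, 0 <= f r) ->
  measurable_fun `]s 0%N, s N] f ->
  (forall i r, (i < N)%N -> s i < r <= s i.+1 -> 0 <= f r <= C i) ->
  (\int[mu]_(r in `]s 0%N, s N]) (f r)%:E <=
     (\sum_(0 <= i < N) C i * (s i.+1 - s i))%:E)%E.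
Proof.
move=> smono f0 mf hf.
suff H : forall k, (k <= N)%N -> (\int[mu]_(r in `]s 0%N, s k]) (f r)%:E <=
     (\sum_(0 <= i < k) C i * (s i.+1 - s i))%:E)%E by exact: H.
elim=> [_|k IH kN].
  by rewrite set_itvoc0 integral_set0 big_geq.
have kN' : (k <= N)%N by exact: ltnW.
rewrite (@itv_bndbnd_setU _ _ _ (BRight (s k))); last 2 first.
- by rewrite bnd_simp; apply: smono.
- by rewrite bnd_simp; apply: smono.
have mfk1 : measurable_fun `]s 0%N, s k.+1] f.
  apply: measurable_funS mf => //; apply: subset_itvl; rewrite bnd_simp.
  exact: smono.
rewrite ge0_integral_setU //; last 3 first.
- rewrite -itv_bndbnd_setU; last 2 first.
  + by rewrite bnd_simp; apply: smono.
  + by rewrite bnd_simp; apply: smono.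
  exact/measurable_realfun.measurable_EFinP.
- by move=> r _; rewrite lee_fin.
- apply/eqP; rewrite -subset0 => r [] /=; rewrite !in_itv /= => /andP[_ a1] /andP[a2 _].
  by have := lt_le_trans a2 a1; rewrite ltxx.
rewrite big_nat_recr //= EFinD; apply: leeD.
  apply: IH => //.
apply: int_piece; first by apply: smono.
  apply: measurable_funS mfk1 => //; apply: subset_itvr; rewrite bnd_simp.
  exact: smono.
by move=> r hr; apply: hf.
Qed.
End IntGrid.
Section Core.
Variables (R : realType) (xL xH a : R) (G H X Y : R -> R).
Hypothesis ha : 0 < a.
Hypothesis hX : forall r, -1 <= r <= 1 -> xL <= X r <= xH.
Hypothesis hY : forall r, -1 <= r <= 1 -> xL <= Y r <= xH.
Hypothesis hG : forall r s, -1 <= r <= 1 -> -1 <= s <= 1 -> G s <= G r + (s - r) * a * X r.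
Hypothesis hH : forall r s, -1 <= r <= 1 -> -1 <= s <= 1 -> H s <= H r + (s - r) * a * Y r.
Hypothesis hd0 : forall r, -1 <= r <= 1 -> 0 <= H r - G r.
Hypothesis hdq : forall r s u, -1 <= r -> r < s -> s < u -> u <= 1 ->
  H s - G s <= Num.max (H r - G r) (H u - G u).
Hypothesis mX : measurable_fun (`]-1, 1[ : set R) X.
Hypothesis mY : measurable_fun (`]-1, 1[ : set R) Y.

Local Notation mu := (@lebesgue_measure R).

Let monoG (Z : R -> R) (K : R -> R) :
  (forall r s, -1 <= r <= 1 -> -1 <= s <= 1 -> K s <= K r + (s - r) * a * Z r) ->
  forall r s, -1 <= r -> r <= s -> s <= 1 -> Z s <= Z r.
Proof.
move=> hK r s h1 h2 h3.
have r1 : -1 <= r <= 1 by apply/andP; split; lra.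
have s1 : -1 <= s <= 1 by apply/andP; split; lra.
have A := hK r s r1 s1; have B := hK s r s1 r1.
have C : 0 <= (s - r) * a * (Z r - Z s) by lra.
have [->|sr] := eqVneq s r; first by [].
have sr' : 0 < (s - r) * a.
  by apply: mulr_gt0 => //; rewrite subr_gt0 lt_neqAle h2 andbT eq_sym.
by move: C; rewrite pmulr_rge0 // subr_ge0.
Qed.

Let mf : measurable_fun (`]-1, 1] : set R) (fun r => `|Y r - X r|).
Proof.
rewrite -(setUitv1 true); last by rewrite bnd_simp; lra.
apply/measurable_funU => //; split; last exact: measurable_fun_set1.
apply: measurableT_comp; first exact: measurable_realfun.normr_measurable.
exact: measurable_realfun.measurable_funB.
Qed.

Let D := (H (-1) - G (-1)) + (H 1 - G 1).

Let Hn (n : nat) : (0 < n)%N ->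
  (\int[mu]_(r in (`](-1)%R, 1%R[ : set R)) (`|Y r - X r|)%:E <=
    (D / a + 4 * (xH - xL) / n%:R)%:E)%E.
Proof.
move=> n0.
have nR : 0 < n%:R :> R by rewrite ltr0n.
pose h := 2 / n%:R : R.
have h0 : 0 < h by rewrite /h divr_gt0.
pose sg := fun i : nat => -1 + i%:R * h.
have sg0 : sg 0%N = -1 by rewrite /sg mul0r addr0.
have sgn : sg n = 1.
  rewrite /sg /h; have nn : n%:R != 0 :> R by rewrite gt_eqF.
  have -> : n%:R * (2 / n%:R) = 2 :> R by field.
  lra.
have sgS : forall i, sg i.+1 - sg i = h.
  by move=> i; rewrite /sg -addn1 natrD; lra.
have sgmono : forall i j, (i <= j)%N -> sg i <= sg j.
  move=> i j ij; rewrite /sg lerD2l ler_wpM2r ?ler_nat //; exact: ltW.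
have sglt : forall i j, (i < j)%N -> sg i < sg j.
  move=> i j ij; rewrite /sg ltrD2l ltr_pM2r ?ltr_nat //.
have sgr : forall i, (i <= n)%N -> -1 <= sg i <= 1.
  move=> i iN; rewrite -sg0 -sgn; apply/andP; split; apply: sgmono => //.
pose d := fun r => H r - G r.
pose C := fun i => `|d (sg i.+1) - d (sg i)| / (h * a) + (X (sg i) - X (sg i.+1))
   + (Y (sg i) - Y (sg i.+1)).
apply: (@le_trans _ _ (\int[mu]_(r in (`](-1)%R, 1%R] : set R)) (`|Y r - X r|)%:E)%E).
  apply: ge0_subset_integral => //.
  - exact/measurable_realfun.measurable_EFinP.
  - by apply: subset_itvl; rewrite bnd_simp.
have -> : (`](-1)%R, 1%R]%classic : set R) = (`]sg 0%N, sg n]%classic : set R) by rewrite sg0 sgn.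
apply: le_trans.
  apply: (@int_grid R (fun r => `|Y r - X r|) sg C n) => //.
    by rewrite sg0 sgn.
  move=> i r iN /andP[r1 r2]; rewrite normr_ge0 /=.
  have si := sgr i (ltnW iN); have si1 := sgr i.+1 iN.
  have s01 := sgmono i i.+1 (leqnSn i).
  have hxr : X (sg i.+1) <= X r <= X (sg i).
    apply/andP; split; apply: (monoG _ _ hG); lra.
  have hyr : Y (sg i.+1) <= Y r <= Y (sg i).
    apply/andP; split; apply: (monoG _ _ hH); lra.
  have ha' : 0 < h * a by exact: mulr_gt0.
  pose p := (G (sg i.+1) - G (sg i)) / (h * a).
  pose q := (H (sg i.+1) - H (sg i)) / (h * a).
  have hp : X (sg i.+1) <= p <= X (sg i).
    have A := hG _ _ si si1; have B := hG _ _ si1 si.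
    have := sgS i; rewrite /p => hS.
    apply/andP; split; [rewrite ler_pdivlMr // | rewrite ler_pdivrMr //]; nra.
  have hq : Y (sg i.+1) <= q <= Y (sg i).
    have A := hH _ _ si si1; have B := hH _ _ si1 si.
    have := sgS i; rewrite /q => hS.
    apply/andP; split; [rewrite ler_pdivlMr // | rewrite ler_pdivrMr //]; nra.
  apply: le_trans; first exact: (@absbound R _ _ _ _ _ _ _ _ hxr hp hyr hq).
  have -> : q - p = (d (sg i.+1) - d (sg i)) / (h * a).
    by rewrite /q /p /d -mulrBl; congr (_ / _); ring.
  rewrite normrM normfV (gtr0_norm ha') /C; lra.
rewrite lee_fin.
have -> : \sum_(0 <= i < n) C i * (sg i.+1 - sg i) =
   (\sum_(0 <= i < n) `|d (sg i.+1) - d (sg i)|) / a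
   + h * (\sum_(0 <= i < n) (X (sg i) - X (sg i.+1)))
   + h * (\sum_(0 <= i < n) (Y (sg i) - Y (sg i.+1))).
  rewrite mulr_suml !mulr_sumr -!big_split /=; apply: eq_bigr => i _.
  rewrite sgS /C; move: (`|d (sg i.+1) - d (sg i)|) (X (sg i) - X (sg i.+1)) (Y (sg i) - Y (sg i.+1)) => u v w.
  have hh : h != 0 by rewrite gt_eqF.
  have haa : a != 0 by rewrite gt_eqF.
  by field; rewrite haa hh.
have tX : \sum_(0 <= i < n) (X (sg i) - X (sg i.+1)) = X (sg 0%N) - X (sg n).
  rewrite (@telescope_sumr_eq _ _ _ (fun k => - X (sg k))) //; first lra.
  by move=> k _ /=; lra.
have tY : \sum_(0 <= i < n) (Y (sg i) - Y (sg i.+1)) = Y (sg 0%N) - Y (sg n).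
  rewrite (@telescope_sumr_eq _ _ _ (fun k => - Y (sg k))) //; first lra.
  by move=> k _ /=; lra.
rewrite tX tY.
have tv : \sum_(0 <= i < n) `|d (sg i.+1) - d (sg i)| <= D.
  have := @tv_seq R (fun i => d (sg i)) n.
  rewrite /D /d sg0 sgn; apply.
    by move=> i iN; apply: hd0; apply: sgr.
  move=> i j k ij jk kN; apply: hdq.
  - by have := sgr i (ltnW (leq_trans (ltn_trans ij jk) kN)); case/andP.
  - exact: sglt.
  - exact: sglt.
  - by have := sgr k kN; case/andP.
have hxb := hX _ (sgr 0%N (leq0n n)); have hxb' := hX _ (sgr n (leqnn n)).
have hyb := hY _ (sgr 0%N (leq0n n)); have hyb' := hY _ (sgr n (leqnn n)).
have tva : (\sum_(0 <= i < n) `|d (sg i.+1) - d (sg i)|) / a <= D / a.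
  by rewrite ler_pM2r ?invr_gt0.
have e4 : 4 * (xH - xL) / n%:R = h * (xH - xL) + h * (xH - xL).
  rewrite /h; field; by rewrite gt_eqF.
rewrite e4.
have : h * (X (sg 0%N) - X (sg n)) <= h * (xH - xL).
  rewrite ler_pM2l //; lra.
have : h * (Y (sg 0%N) - Y (sg n)) <= h * (xH - xL).
  rewrite ler_pM2l //; lra.
lra.
Qed.

Lemma core : (\int[mu]_(r in (`](-1)%R, 1%R[ : set R)) (`|Y r - X r|)%:E <= (D / a)%:E)%E.
Proof.
apply/lee_addgt0Pr => e e0.
have K0 : 0 <= 4 * (xH - xL).
  have := hX 0; rewrite !lerN10 ler01 => /(_ isT); lra.
pose n := (Num.Def.trunc (4 * (xH - xL) / e)).+1.
apply: le_trans; first exact: (Hn _ (ltn0Sn _)).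
rewrite -EFinD lee_fin lerD2l.
have := truncnS_gt (4 * (xH - xL) / e); rewrite -/n => hn.
have nR : 0 < n%:R :> R by rewrite ltr0n.
rewrite ler_pdivrMr //; have := ltW hn; rewrite ler_pdivrMr //; lra.
Qed.

End Core.
Section Helpers.
Variable R : realType.

Lemma inf_le_img (F : set R) (f : R -> R) (b y : R) :
  (forall z, F z -> b <= f z) -> F y -> inf [set f z | z in F] <= f y.
Proof.
move=> hb Fy; apply: ge_inf; last by exists y.
by exists b => w [z Fz <-]; exact: hb.
Qed.

Lemma le_inf_img (F : set R) (f : R -> R) (b y : R) :
  F y -> (forall z, F z -> b <= f z) -> b <= inf [set f z | z in F].
Proof.
move=> Fy hb; apply: lb_le_inf; first by exists (f y), y.
by move=> w [z Fz <-]; exact: hb.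
Qed.

Lemma norm_scal (n : R -> R) : is_norm n -> forall x, n x = `|x| * n 1.
Proof. by case=> _ _ hm _ x; rewrite -hm mulr1. Qed.

Lemma norm1_gt0 (n : R -> R) : is_norm n -> 0 < n 1.
Proof.
case=> h0 hz _ _; rewrite lt_neqAle h0 andbT; apply/eqP => /esym /hz.
by move/eqP; rewrite oner_eq0.
Qed.

End Helpers.
Arguments inf_le_img {R F f b y}.
Arguments le_inf_img {R F f b y}.
Arguments norm_scal {R n}.
Arguments norm1_gt0 {R n}.


Lemma ltr0Sn_aux (R : realType) : -1 <= (1 : R). Proof. lra. Qed.
Lemma ler_N10_aux (R : realType) : -1 <= (0 : R). Proof. lra. Qed.
Lemma ler_N11_aux (R : realType) : -1 <= (1 : R). Proof. lra. Qed.
Lemma lt0n_aux T : T != 0%N -> (0 < T)%N. Proof. by rewrite lt0n. Qed.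
Lemma mul_le_abs (R : realType) (r z : R) : -1 <= r <= 1 -> r * z <= `|z|.
Proof.
move=> /andP[h1 h2]; have [z0|z0] := lerP 0 z.
  by rewrite ger0_norm //; nra.
by rewrite ltr0_norm //; nra.
Qed.

Lemma ltnS_ok k T : (k <= T)%N -> (1 <= k.+1 <= T.+1)%N.
Proof. by move=> kT; apply/andP; split; [|rewrite ltnS]. Qed.

Section Main.
Variables (R : realType) (xL xH : R) (nrm N : R -> R) (theta : R)
  (T : nat) (c : nat -> R -> R) (X : R -> nat -> R).
Hypothesis h0L : 0 <= xL.
Hypothesis hLH : xL <= xH.
Hypothesis hnrm : is_norm nrm.
Hypothesis hth : 1 <= theta.
Hypothesis hN : is_norm N.
Hypothesis hN1 : N 1 = theta * nrm 1.
Hypothesis hc0 : forall t, (1 <= t <= T)%N -> forall x, xL <= x <= xH -> 0 <= c t x.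
Hypothesis hcv : forall t, (1 <= t <= T)%N -> convex_on `[xL, xH] (c t).
Hypothesis hX : forall r, -1 < r < 1 -> forall t, (1 <= t <= T.+1)%N ->
     xL <= X r t <= xH /\
     forall y, xL <= y <= xH ->
       rbg_Y `[xL, xH] N c r t (X r t) <= rbg_Y `[xL, xH] N c r t y.
Hypothesis hmX : forall t, measurable_fun (`](-1), 1[ : set R) (fun r : R => X r t).

Let F : set R := `[xL, xH].
Let Fin x : F x = (xL <= x <= xH).
Proof. by rewrite /F /= in_itv. Qed.
Let FL : F xL. Proof. by rewrite Fin lexx hLH. Qed.

Let a := N 1.
Let a0 : 0 < a. Proof. exact: norm1_gt0 hN. Qed.
Let Nabs x : N x = a * `|x|. Proof. by rewrite (norm_scal hN) mulrC. Qed.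
Let Na x : 0 <= x -> N x = a * x. Proof. by move=> x0; rewrite Nabs ger0_norm. Qed.
Let N0 : N 0 = 0. Proof. by rewrite Na // mulr0. Qed.
Let Nge0 x : 0 <= N x. Proof. by case: hN. Qed.
Let NF x : F x -> N x <= a * xH.
Proof.
rewrite Fin => /andP[h1 h2]; rewrite Na; last exact: le_trans h0L h1.
by rewrite ler_pM2l.
Qed.

Let W k := rbg_w F N c k.
Let WS k x : W k.+1 x = inf [set W k y + c k.+1 y + N (x - y) | y in F].
Proof. by []. Qed.

Let Wnn k : (k <= T)%N -> forall x, 0 <= W k x.
Proof.
elim: k => [_ x|k IH kT x]; first exact: Nge0.
rewrite WS; apply: (le_inf_img FL) => z Fz.
have := IH (ltnW kT) z; have := Nge0 (x - z).
have : 0 <= c k.+1 z by apply: hc0; [rewrite kT | rewrite -Fin].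
lra.
Qed.

Let Wle k x y : (k < T)%N -> F y -> W k.+1 x <= W k y + c k.+1 y + N (x - y).
Proof.
move=> kT Fy; rewrite WS; apply: (inf_le_img (b := 0)) => // z Fz.
have := Wnn _ (ltnW kT) z; have := Nge0 (x - z).
have : 0 <= c k.+1 z by apply: hc0; [rewrite kT | rewrite -Fin].
lra.
Qed.

Let Gk k r := inf [set W k x + r * N x | x in F].

Let Gle k r y : (k <= T)%N -> -1 <= r -> F y -> Gk k r <= W k y + r * N y.
Proof.
move=> kT r1 Fy; apply: (inf_le_img (b := - (a * xH))) => // z Fz.
have := Wnn _ kT z; have := NF _ Fz; have := Nge0 z; nra.
Qed.

Let Gge k r b : (forall y, F y -> b <= W k y + r * N y) -> b <= Gk k r.
Proof. by move=> h; apply: (le_inf_img FL). Qed.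

Let Gatt k r : (k <= T)%N -> -1 < r < 1 ->
  Gk k r = W k (X r k.+1) + r * N (X r k.+1).
Proof.
move=> kT r1; have [hxF hmin] := hX r r1 k.+1 (ltnS_ok _ _ kT).
apply/eqP; rewrite eq_le; apply/andP; split.
  apply: (Gle k r (X r k.+1) kT); [by case/andP: r1 => /ltW | by rewrite Fin].
apply: Gge => y; rewrite Fin => /hmin; by rewrite /rbg_Y /=.
Qed.

Let Xe k (r : R) : R := if r == -1 then xH else if r == 1 then xL else X r k.

Let interior (r : R) : -1 <= r <= 1 -> r != -1 -> r != 1 -> -1 < r < 1.
Proof.
move=> /andP[h1 h2] n1 p1; apply/andP; split.
  by rewrite lt_neqAle h1 andbT eq_sym.
by rewrite lt_neqAle h2 andbT.
Qed.

Let XeF k r : (1 <= k <= T.+1)%N -> -1 <= r <= 1 -> xL <= Xe k r <= xH.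
Proof.
move=> kT r1; rewrite /Xe.
have [_|n1] := eqVneq r (-1); first by rewrite lexx hLH.
have [_|p1] := eqVneq r 1; first by rewrite lexx hLH.
by case: (hX r (interior r r1 n1 p1) k kT).
Qed.

Let Gsg k r s : (k <= T)%N -> -1 <= r <= 1 -> -1 <= s <= 1 ->
  Gk k s <= Gk k r + (s - r) * a * Xe k.+1 r.
Proof.
move=> kT r1 s1; rewrite /Xe.
have [->|n1] := eqVneq r (-1).
  have : Gk k s - (s - -1) * a * xH <= Gk k (-1).
    apply: Gge => y Fy.
    have := Gle k s y kT (proj1 (andP s1)) Fy.
    have yF := Fy; rewrite Fin in yF; case/andP: yF => y1 y2.
    rewrite (Na y (le_trans h0L y1)).
    have : (s - -1) * a * y <= (s - -1) * a * xH.
      rewrite ler_wpM2l // mulr_ge0 //; [lra | exact: ltW].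
    nra.
  lra.
have [->|p1] := eqVneq r 1.
  have : Gk k s - (s - 1) * a * xL <= Gk k 1.
    apply: Gge => y Fy.
    have := Gle k s y kT (proj1 (andP s1)) Fy.
    have yF := Fy; rewrite Fin in yF; case/andP: yF => y1 y2.
    rewrite (Na y (le_trans h0L y1)).
    have : (1 - s) * a * xL <= (1 - s) * a * y.
      rewrite ler_wpM2l // mulr_ge0 //; [lra | exact: ltW].
    nra.
  lra.
have ri := interior r r1 n1 p1.
rewrite (Gatt k r kT ri).
have [hxF _] := hX r ri k.+1 (ltnS_ok _ _ kT).
have := Gle k s (X r k.+1) kT (proj1 (andP s1)) (eq_ind _ id hxF _ (esym (Fin _))).
rewrite (Na _ (le_trans h0L (proj1 (andP hxF)))); nra.
Qed.

Let Hk k r := inf [set W k y + c k.+1 y + r * N y | y in F].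

Let Hle k r y : (k < T)%N -> -1 <= r -> F y -> Hk k r <= W k y + c k.+1 y + r * N y.
Proof.
move=> kT r1 Fy; apply: (inf_le_img (b := - (a * xH))) => // z Fz.
have := Wnn _ (ltnW kT) z; have := NF _ Fz; have := Nge0 z.
have : 0 <= c k.+1 z by apply: hc0; [rewrite kT | rewrite -Fin].
nra.
Qed.

Let Hrep k r : (k < T)%N -> -1 <= r <= 1 -> Gk k.+1 r = Hk k r.
Proof.
move=> kT /andP[r1 r2]; apply/eqP; rewrite eq_le; apply/andP; split.
  apply: (le_inf_img FL) => z Fz.
  apply: le_trans; first exact: (Gle k.+1 r z kT r1 Fz).
  have := Wle k z z kT Fz; rewrite subrr N0; lra.
apply: Gge => x Fx.
suff : Hk k r - r * N x <= W k.+1 x by lra.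
rewrite WS; apply: (le_inf_img FL) => y Fy.
have := Hle k r y kT r1 Fy.
have Fx' := Fx; have Fy' := Fy; rewrite Fin in Fx' Fy'.
case/andP: Fx' => x1 x2; case/andP: Fy' => y1 y2.
rewrite (Na y (le_trans h0L y1)) (Na x (le_trans h0L x1)) Nabs.
have hr : r * (y - x) <= `|x - y| by rewrite distrC; apply: mul_le_abs; rewrite r1 r2.
have : r * (y - x) * a <= `|x - y| * a by rewrite ler_pM2r.
nra.
Qed.

Let dnn k r : (k < T)%N -> -1 <= r <= 1 -> 0 <= Gk k.+1 r - Gk k r.
Proof.
move=> kT r1; rewrite subr_ge0 (Hrep k r kT r1).
apply: (le_inf_img FL) => z Fz.
have := Gle k r z (ltnW kT) (proj1 (andP r1)) Fz.
have : 0 <= c k.+1 z by apply: hc0; [rewrite kT | rewrite -Fin].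
lra.
Qed.

Let dq k r s u : (k < T)%N -> -1 <= r -> r < s -> s < u -> u <= 1 ->
  Gk k.+1 s - Gk k s <= Num.max (Gk k.+1 r - Gk k r) (Gk k.+1 u - Gk k u).
Proof.
move=> kT r1 rs su u1.
have rr : -1 <= r <= 1 by apply/andP; split; lra.
have ss : -1 <= s <= 1 by apply/andP; split; lra.
have uu : -1 <= u <= 1 by apply/andP; split; lra.
have si : -1 < s < 1 by apply/andP; split; lra.
rewrite (Hrep k r kT rr) (Hrep k s kT ss) (Hrep k u kT uu).
have [hxF _] := hX s si k.+1 (ltnS_ok _ _ (ltnW kT)).
have Gs := Gatt k s (ltnW kT) si.
move: hxF Gs; set x := X s k.+1 => hxF Gs.
have Fx : F x by rewrite Fin.
have k1 : (1 <= k.+1 <= T)%N by rewrite kT.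
have cc := hcv k.+1 k1.
have x0 : 0 <= x by case/andP: hxF => h _; exact: le_trans h0L h.
have Hsx := Hle k s x kT (proj1 (andP ss)) Fx.
have [A|nA] := pselect (forall y, F y -> x <= y -> c k.+1 x <= c k.+1 y).
  rewrite le_max; apply/orP; left.
  suff : Hk k s + Gk k r - Gk k s <= Hk k r by lra.
  apply: (le_inf_img FL) => y Fy.
  have y0 : 0 <= y by move: Fy; rewrite Fin => /andP[h _]; exact: le_trans h0L h.
  have Hsy := Hle k s y kT (proj1 (andP ss)) Fy.
  have Gry := Gle k r y (ltnW kT) r1 Fy.
  have Grx := Gle k r x (ltnW kT) r1 Fx.
  have [xy|yx] := leP x y.
    have := A y Fy xy; lra.
  move: Hsy Grx Gs; rewrite (Na y y0) (Na x x0) => Hsy Grx Gs.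
  have : (s - r) * (a * y) <= (s - r) * (a * x).
    rewrite ler_pM2l ?subr_gt0 // ler_pM2l //; exact: ltW.
  lra.
have B : forall y, F y -> y <= x -> c k.+1 x <= c k.+1 y.
  move=> y Fy yx; rewrite leNgt; apply/negP => cyx.
  apply: nA => y1 Fy1 xy1; rewrite leNgt; apply/negP => cy1x.
  have yx' : y < x by rewrite lt_neqAle yx andbT; apply/eqP => e; move: cyx; rewrite e ltxx.
  have xy1' : x < y1 by rewrite lt_neqAle xy1 andbT; apply/eqP => e; move: cy1x; rewrite e ltxx.
  have dpos : 0 < y1 - y by lra.
  pose l := (y1 - x) / (y1 - y).
  have l0 : 0 <= l by rewrite /l divr_ge0 //; lra.
  have l1 : l <= 1 by rewrite /l ler_pdivrMr //; lra.
  have lx : l * y + (1 - l) * y1 = x.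
    rewrite /l; field; rewrite gt_eqF //.
  have := cc y y1 l Fy Fy1; rewrite l0 l1 lx => /(_ isT) hc.
  have : l * c k.+1 y <= l * c k.+1 x by rewrite ler_wpM2l //; exact: ltW.
  have : (1 - l) * c k.+1 y1 <= (1 - l) * c k.+1 x.
    by rewrite ler_wpM2l ?subr_ge0 //; exact: ltW.
  have [l0'|l0'] := eqVneq l 0.
    move: hc; rewrite l0' mul0r add0r subr0 mul1r => hc.
    by have := lt_le_trans cy1x hc; rewrite ltxx.
  have : l * c k.+1 y < l * c k.+1 x.
    by rewrite ltr_pM2l // lt_neqAle eq_sym l0' l0.
  lra.
rewrite le_max; apply/orP; right.
suff : Hk k s + Gk k u - Gk k s <= Hk k u by lra.
apply: (le_inf_img FL) => y Fy.
have y0 : 0 <= y by move: Fy; rewrite Fin => /andP[h _]; exact: le_trans h0L h.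
have Hsy := Hle k s y kT (proj1 (andP ss)) Fy.
have Guy := Gle k u y (ltnW kT) (proj1 (andP uu)) Fy.
have Gux := Gle k u x (ltnW kT) (proj1 (andP uu)) Fx.
have [yx|xy] := leP y x.
  have := B y Fy yx; lra.
move: Hsy Gux Gs; rewrite (Na y y0) (Na x x0) => Hsy Gux Gs.
have : (u - s) * (a * x) <= (u - s) * (a * y).
  rewrite ler_pM2l ?subr_gt0 // ler_pM2l //; exact: ltW.
lra.
Qed.

Let XeE k r : -1 < r < 1 -> Xe k r = X r k.
Proof.
case/andP=> h1 h2; rewrite /Xe gt_eqF // lt_eqF //.
Qed.

Let inoo (r : R) : r \in (`](-1)%R, 1%R[%classic : set R) -> -1 < r < 1.
Proof. by rewrite inE /= in_itv. Qed.

Let mXe k : measurable_fun (`](-1)%R, 1%R[%classic : set R) (Xe k).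
Proof.
have H : {in (`](-1)%R, 1%R[%classic : set R), Xe k =1 (fun r => X r k)}.
  by move=> r /inoo rin; rewrite XeE.
exact: (proj2 (measurable_fun_eqP _ H) (hmX k)).
Qed.

Let step k : (k < T)%N ->
  (\int[lebesgue_measure]_(r in (`](-1)%R, 1%R[%classic : set R)) (`|X r k.+2 - X r k.+1|)%:E <=
   (((Gk k.+1 (-1) - Gk k (-1)) + (Gk k.+1 1 - Gk k 1)) / a)%:E)%E.
Proof.
move=> kT.
have := core R xL xH a (Gk k) (Gk k.+1) (Xe k.+1) (Xe k.+2) a0
  (fun r r1 => XeF k.+1 r (ltnS_ok _ _ (ltnW kT)) r1)
  (fun r r1 => XeF k.+2 r (ltnS_ok _ _ kT) r1)
  (fun r s r1 s1 => Gsg k r s (ltnW kT) r1 s1)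
  (fun r s r1 s1 => Gsg k.+1 r s kT r1 s1)
  (fun r r1 => dnn k r kT r1)
  (fun r s u r1 rs su u1 => dq k r s u kT r1 rs su u1)
  (mXe k.+1) (mXe k.+2).
move=> Hc; apply: le_trans Hc; rewrite le_eqVlt; apply/orP; left; apply/eqP.
apply: eq_integral => r /inoo rin.
by rewrite !XeE.
Qed.

Let G0nn r : -1 <= r -> 0 <= Gk 0 r.
Proof.
move=> r1; apply: Gge => y Fy; rewrite /W /=.
have := Nge0 y; nra.
Qed.

Let Gconc : Gk T (-1) + Gk T 1 <= 2 * Gk T 0.
Proof.
suff : (Gk T (-1) + Gk T 1) / 2 <= Gk T 0 by lra.
apply: Gge => y Fy.
have := Gle T (-1) y (leqnn T) (lexx _) Fy.
have := Gle T 1 y (leqnn T) (ltr0Sn_aux R) Fy.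
lra.
Qed.

Let path (s : nat -> R) : s 0%N = 0 -> (forall t, (1 <= t <= T)%N -> F (s t)) ->
  forall k, (k <= T)%N -> forall x,
  W k x <= \sum_(1 <= t < k.+1) (c t (s t) + N (s t - s t.-1)) + N (x - s k).
Proof.
move=> hs0 hsF; elim=> [_ x|k IH kT x].
  by rewrite hs0 subr0 big_geq //= add0r.
have hF : F (s k.+1) by apply: hsF; rewrite kT.
rewrite big_nat_recr //=.
have := Wle k x (s k.+1) kT hF.
have := IH (ltnW kT) (s k.+1).
lra.
Qed.

Let Ocost0 (s : nat -> R) : (forall t, (1 <= t <= T)%N -> F (s t)) ->
  0 <= \sum_(1 <= t < T.+1) (c t (s t) + N (s t - s t.-1)).
Proof.
move=> hsF; rewrite big_seq_cond; apply: sumr_ge0 => t /andP[].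
rewrite mem_index_iota ltnS => tT _.
apply: addr_ge0; last exact: Nge0.
by apply: hc0 => //; rewrite -Fin; apply: hsF.
Qed.

Let s0 : nat -> R := fun t => if t == 0%N then 0 else xL.
Let s0P : s0 0%N = 0 /\ forall t, (1 <= t <= T)%N -> F (s0 t).
Proof. by split => // t /andP[t1 _]; rewrite /s0 gt_eqF. Qed.

Let OPT0 : 0 <= opt_cost F N c T.
Proof.
apply: lb_le_inf; first by exists (\sum_(1 <= t < T.+1) (c t (s0 t) + N (s0 t - s0 t.-1))), s0.
by move=> y [s [hs0 hsF] <-]; exact: Ocost0.
Qed.

Let GTopt : (0 < T)%N -> Gk T 0 <= opt_cost F N c T.
Proof.
move=> T0.
apply: lb_le_inf; first by exists (\sum_(1 <= t < T.+1) (c t (s0 t) + N (s0 t - s0 t.-1))), s0.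
move=> y [s [hs0 hsF] <-].
have FsT : F (s T) by apply: hsF; rewrite T0 leqnn.
have := Gle T 0 (s T) (leqnn T) (ler_N10_aux R) FsT.
have := path s hs0 hsF T (leqnn T) (s T).
rewrite subrr N0 mul0r; lra.
Qed.

Lemma mainS :
  (((2%:R : R)^-1)%:E *
    (\int[@lebesgue_measure R]_(r in (`](-1)%R, 1%R[ : set R)) (switching_cost nrm T (X r))%:E)
  <= (opt_cost `[xL, xH] N c T / theta)%:E)%E.
Proof.
pose n1 := nrm 1.
have n10 : 0 < n1 := norm1_gt0 hnrm.
have nE x : nrm x = n1 * `|x| by rewrite (norm_scal hnrm) mulrC.
have th0 : 0 < theta := lt_le_trans ltr01 hth.
have aE : a = theta * n1 by [].
rewrite /switching_cost.
under eq_integral => r _ do rewrite -sumEFin.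
rewrite ge0_integral_sum //; last first.
  by move=> t r _; rewrite lee_fin; case: hnrm.
  move=> t; apply/measurable_realfun.measurable_EFinP.
  have -> : (fun r => nrm (X r t.+1 - X r t)) = (fun r => n1 * `|X r t.+1 - X r t|).
    by apply/funext => r; rewrite nE.
  apply: measurable_realfun.measurable_funM => //.
  apply: measurableT_comp; first exact: measurable_realfun.normr_measurable.
  exact: (measurable_realfun.measurable_funB (hmX t.+1) (hmX t)).
apply: (@le_trans _ _ ((2%:R : R)^-1%:E *
   \sum_(1 <= t < T.+1) (n1 / a * ((Gk t (-1) - Gk t.-1 (-1)) + (Gk t 1 - Gk t.-1 1)))%:E)%E).
  apply: lee_wpmul2l; first by rewrite lee_fin invr_ge0.
  rewrite big_seq_cond [X in (_ <= X)%E]big_seq_cond; apply: lee_sum => t /andP[].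
  rewrite mem_index_iota => /andP[t1 tT] _.
  case: t t1 tT => // k _; rewrite ltnS => kT.
  have -> : (fun r => (nrm (X r k.+2 - X r k.+1))%:E) =
            (fun r => (n1%:E * (`|X r k.+2 - X r k.+1|)%:E)%E).
    by apply/funext => r; rewrite nE EFinM.
  rewrite ge0_integralZl_EFin //; last 2 first.
  - apply/measurable_realfun.measurable_EFinP.
    apply: measurableT_comp; first exact: measurable_realfun.normr_measurable.
    exact: (measurable_realfun.measurable_funB (hmX k.+2) (hmX k.+1)).
  - exact: ltW.
  rewrite -mulrA EFinM; apply: lee_wpmul2l; first by rewrite lee_fin ltW.
  by rewrite mulrC; exact: step.
rewrite sumEFin -EFinM lee_fin -mulr_sumr.
rewrite (@telescope_sumr_eq _ _ _ (fun t => Gk t.-1 (-1) + Gk t.-1 1)) //; last first.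
  by move=> t /andP[t1 _]; case: t t1 => // k _ /=; lra.
rewrite /=.
have S2 : Gk T (-1) + Gk T 1 - (Gk 0 (-1) + Gk 0 1) <= 2 * opt_cost F N c T.
  have := G0nn (-1) (lexx _); have := G0nn 1 (ler_N11_aux R).
  have O := OPT0.
  have [T0|T0] := posnP T; first by rewrite T0 in O *; lra.
  have := GTopt T0; have := Gconc; lra.
have -> : n1 / a = theta^-1 by rewrite aE; field; rewrite !gt_eqF.
have ti : 0 < theta^-1 by rewrite invr_gt0.
move: S2; rewrite /F; nra.
Qed.

End Main.

Theorem lemma5 (R : realType) (xL xH : R) (nrm N : R -> R) (theta : R)
  (T : nat) (c : nat -> R -> R) (X : R -> nat -> R) :
  0 <= xL -> xL <= xH ->
  is_norm nrm ->
  1 <= theta ->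
  is_norm N -> N 1 = theta * nrm 1 ->
  (forall t, (1 <= t <= T)%N -> forall x, xL <= x <= xH -> 0 <= c t x) ->
  (forall t, (1 <= t <= T)%N -> convex_on `[xL, xH] (c t)) ->
  (exists G : R, forall t, (1 <= t <= T)%N -> forall x, xL <= x <= xH ->
     exists g, subgradient `[xL, xH] (c t) x g /\ `|g| <= G) ->
  (* X r t = x^t chosen by RBG(N) with random draw r: a minimizer of Y^t over F *)
  (forall r, -1 < r < 1 -> forall t, (1 <= t <= T.+1)%N ->
     xL <= X r t <= xH /\
     forall y, xL <= y <= xH ->
       rbg_Y `[xL, xH] N c r t (X r t) <= rbg_Y `[xL, xH] N c r t y) ->
  (forall t, measurable_fun (`](-1), 1[ : set R) (fun r : R => X r t)) ->
  (((2%:R : R)^-1)%:E *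
    (\int[@lebesgue_measure R]_(r in (`](-1)%R, 1%R[ : set R)) (switching_cost nrm T (X r))%:E)
  <= (opt_cost `[xL, xH] N c T / theta)%:E)%E.
Proof.
move=> h0L hLH hnrm hth hN hN1 hc0 hcv _ hX hmX.
exact: (@mainS R xL xH nrm N theta T c X h0L hLH hnrm hth hN hN1 hc0 hcv hX hmX).
Qed.
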